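(* Every map in $p\mathsf{Ch}^*_\mathbb{Q}$ having the right lifting property with respect to all maps in $\mathbb{I}$ also has the right lifting property with respect to all maps in $\mathbb{J}$.
   Context: $p\mathsf{Ch}^*_\mathbb{Q}=\mathsf{Fun}([0,\infty),\mathsf{Ch}^*_\mathbb{Q})$, non-negatively graded rational cochain complexes. $S^k=\mathbb{Q}$ in degree $k$; $D^k$ ($k\ge1$) is $\mathbb{Q}$ in degrees $k-1,k$ with identity differential; $D^0=0$. For $0\le s<t<\infty$, $\mathbb{S}^k_{[s,t)}$ is $0$ at $r<s$, $S^k$ at $s\le r<t$, $D^k$ at $r\ge t$; $\mathbb{S}^k_{[s,\infty)}$ is $0$ at $r<s$, $S^k$ at $r\ge s$; $\mathbb{D}^k_s$ is $0$ at $r<s$, $D^k$ at $r\ge s$ (structure maps identities/inclusions). $\mathbb{I}=\{\mathbb{S}^k_{[s,t)}\to\mathbb{D}^k_s: k\in\mathbb{N},\ 0\le s<t\le\infty\}$ and $\mathbb{J}=\{\mathbb{D}^k_t\to\mathbb{D}^k_s: k\in\mathbb{N},\ 0\le s<t<\infty\}\cup\{0\to\mathbb{D}^k_s: k\in\mathbb{N},\ 0\le s<\infty\}$ (evident inclusions). *)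

(* Defs.v *)
From HB Require Import structures.
From mathcomp Require Import all_boot all_order all_algebra.
From Stdlib Require Import Reals.
Set Implicit Arguments. Unset Strict Implicit. Unset Printing Implicit Defensive.
Import GRing.Theory.
Local Open Scope ring_scope.

Definition nnR := {r : R | Rle 0 r}.
Definition nnle (r s : nnR) : Prop := Rle (proj1_sig r) (proj1_sig s).

(* Data of a persistence cochain complex of Q-vector spaces, non-negatively
   graded: X r n is the degree-n part at time r, pd is the differential,
   ptr r s is the structure map X r -> X s (only meaningful for r <= s). *)
Record pcc := PCC {
  pobj :> nnR -> nat -> lmodType rat;
  pd : forall r n, {linear pobj r n -> pobj r n.+1};
  ptr : forall r s n, {linear pobj r n -> pobj s n}
}.

Definition pcc_law (X : pcc) : Prop :=
  (forall r n x, pd X r n.+1 (pd X r n x) = 0) /\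
  (forall r n x, ptr X r r n x = x) /\
  (forall r s t n x, nnle r s -> nnle s t ->
      ptr X s t n (ptr X r s n x) = ptr X r t n x) /\
  (forall r s n x, nnle r s ->
      pd X s n (ptr X r s n x) = ptr X r s n.+1 (pd X r n x)).

Record pmor (X Y : pcc) := PMor {
  pcmp :> forall r n, {linear X r n -> Y r n}
}.

Definition pmor_law (X Y : pcc) (f : pmor X Y) : Prop :=
  (forall r n x, f r n.+1 (pd X r n x) = pd Y r n (f r n x)) /\
  (forall r s n x, nnle r s -> f s n (ptr X r s n x) = ptr Y r s n (f r n x)).

Definition rlp (A B X Y : pcc) (i : pmor A B) (p : pmor X Y) : Prop :=
  forall (u : pmor A X) (v : pmor B Y), pmor_law u -> pmor_law v ->
    (forall r n a, p r n (u r n a) = v r n (i r n a)) ->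
    exists h : pmor B X, pmor_law h /\
      (forall r n a, h r n (i r n a) = u r n a) /\
      (forall r n b, p r n (h r n b) = v r n b).

(* Elementary objects: at each (r, n) a space Q^0 or Q^1 (as row vectors),
   all differentials / structure maps / evident inclusions are the identity
   between 1-dimensional spaces and zero otherwise (pid_mx 1). *)
Definition mkpcc (dm : nnR -> nat -> nat) : pcc :=
  {| pobj r n := 'rV[rat]_(dm r n);
     pd r n := mulmxr (pid_mx 1);
     ptr r s n := mulmxr (pid_mx 1) |}.

Definition mkmor (d1 d2 : nnR -> nat -> nat) : pmor (mkpcc d1) (mkpcc d2) :=
  @PMor (mkpcc d1) (mkpcc d2) (fun r n => mulmxr (pid_mx 1)).

(* S^k: Q in degree k.  D^k (k >= 1): Q in degrees k-1, k; D^0 = 0. *)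
Definition Sdim (k n : nat) : nat := (n == k)%N.
Definition Ddim (k n : nat) : nat :=
  if k is 0 then 0%N else ((n == k) || (n.+1 == k))%N.

(* S^k_[s,t) for t = Some t, S^k_[s,oo) for t = None. *)
Definition Sph_dim (k : nat) (s : R) (t : option R) (r : nnR) (n : nat) : nat :=
  if Rlt_dec (proj1_sig r) s then 0%N else
  match t with
  | Some t => if Rlt_dec (proj1_sig r) t then Sdim k n else Ddim k n
  | None => Sdim k n
  end.
Definition Dsk_dim (k : nat) (s : R) (r : nnR) (n : nat) : nat :=
  if Rlt_dec (proj1_sig r) s then 0%N else Ddim k n.
Definition zero_dim (r : nnR) (n : nat) : nat := 0%N.

Definition Sph k s t := mkpcc (Sph_dim k s t).
Definition Dsk k s := mkpcc (Dsk_dim k s).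
Definition pzero := mkpcc zero_dim.

Definition I_map k s t : pmor (Sph k s t) (Dsk k s) := mkmor _ _.
Definition J_map k s t : pmor (Dsk k t) (Dsk k s) := mkmor _ _.
Definition J0_map k s : pmor pzero (Dsk k s) := mkmor _ _.

(* Main.v *)
Require Import Defs.
From HB Require Import structures.
From mathcomp Require Import all_boot all_order all_algebra zify.
From Stdlib Require Import Reals Lra.
Set Implicit Arguments. Unset Strict Implicit. Unset Printing Implicit Defensive.
Import GRing.Theory.
Local Open Scope ring_scope.

Definition coord m (v : 'rV[rat]_m) : rat := \sum_(i < m) v 0 i.
Definition gen m : 'rV[rat]_m := const_mx 1.

Lemma coord_dim0 m (v : 'rV[rat]_m) : m = 0%nat -> coord v = 0.
Proof. by move=> E; rewrite /coord; move: v; rewrite E => v; rewrite big_ord0. Qed.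

Lemma coord_gen m : m = 1%nat -> coord (gen m) = 1.
Proof. by move=> ->; rewrite /coord big_ord1 mxE. Qed.

Lemma rv_decomp m (v : 'rV[rat]_m) : (m <= 1)%nat -> v = coord v *: gen m.
Proof.
case: m v => [|[|m]] v // _.
  by rewrite [v]thinmx0 [gen 0]thinmx0 scaler0.
apply/matrixP=> i j; rewrite !ord1 !mxE /coord big_ord1 mulr1 //.
Qed.

Lemma lin_decomp m (V : lmodType rat) (f : {linear 'rV[rat]_m -> V}) v :
  (m <= 1)%nat -> f v = coord v *: f (gen m).
Proof. by move=> H; rewrite {1}(rv_decomp v H) linearZ. Qed.

Lemma coord_pid a b (v : 'rV[rat]_a) : (a <= 1)%nat ->
  coord (v *m pid_mx 1 : 'rV_b) = if (0 < b)%nat then coord v else 0.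
Proof.
case: a v => [|[|a]] v // _.
  by rewrite [v]thinmx0 mul0mx /coord; case: b => [|b] /=; rewrite ?big_ord0 // big1 // => i _; rewrite mxE.
case: b => [|b]; first by rewrite /coord big_ord0.
rewrite /= /coord big_ord_recl big_ord1 big1 ?addr0.
  by rewrite mxE big_ord1 /pid_mx mxE /= mulr1.
move=> i _; rewrite mxE big_ord1 /pid_mx mxE /=.
by rewrite mulr0.
Qed.

Section Elfun.
Variables (m : nat) (V : lmodType rat) (e : V).
Definition elfun (v : 'rV[rat]_m) : V := coord v *: e.
Lemma elfun_is_linear : linear_for *:%R elfun.
Proof.
move=> a x y; rewrite /elfun /coord scalerA -scalerDl; congr (_ *: _).
rewrite mulr_sumr -big_split /=; apply: eq_bigr => i _; by rewrite !mxE.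
Qed.
HB.instance Definition _ := GRing.isLinear.Build rat 'rV[rat]_m V _ elfun elfun_is_linear.
End Elfun.

Definition elmor (dm : nnR -> nat -> nat) (X : pcc) (e : forall r n, X r n) : pmor (mkpcc dm) X :=
  @PMor (mkpcc dm) X (fun r n => @elfun (dm r n) (X r n) (e r n)).

Definition bnd (dm : nnR -> nat -> nat) := forall r n, (dm r n <= 1)%nat.
Definition ev dm (X : pcc) (f : pmor (mkpcc dm) X) r n : X r n := f r n (gen (dm r n)).

Section Ev.
Variables (dm : nnR -> nat -> nat) (X : pcc) (f : pmor (mkpcc dm) X).
Hypothesis hb : bnd dm.

Lemma ev_apply r n (v : 'rV[rat]_(dm r n)) : f r n v = coord v *: ev f r n.
Proof. exact: (lin_decomp (f r n) v (hb r n)). Qed.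

Lemma dim01 r n : dm r n = 0%nat \/ dm r n = 1%nat.
Proof. by have := hb r n; case: (dm r n) => [|[|]]; auto. Qed.

Lemma ev_zero r n : dm r n = 0%nat -> ev f r n = 0.
Proof. by move=> E; rewrite /ev ev_apply coord_dim0 // scale0r. Qed.

Lemma ev_pd : pmor_law f -> forall r n,
  pd X r n (ev f r n) = if (0 < dm r n)%nat && (0 < dm r n.+1)%nat then ev f r n.+1 else 0.
Proof.
move=> [L1 L2] r n; case: (dim01 r n) => E.
  by rewrite ev_zero // linear0 E.
rewrite E /= {1}/ev -L1 ev_apply /= coord_pid ?E // coord_gen //.
by case: ifP => _; rewrite ?scale1r ?scale0r.
Qed.

Lemma ev_ptr : pmor_law f -> forall r r' n, nnle r r' ->
  ptr X r r' n (ev f r n) = if (0 < dm r n)%nat && (0 < dm r' n)%nat then ev f r' n else 0.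
Proof.
move=> [L1 L2] r r' n le; case: (dim01 r n) => E.
  by rewrite ev_zero // linear0 E.
rewrite E /= {1}/ev -L2 // ev_apply /= coord_pid ?E // coord_gen //.
by case: ifP => _; rewrite ?scale1r ?scale0r.
Qed.
End Ev.

Lemma ev_elmor dm (X : pcc) (e : forall r n, X r n) r n : bnd dm ->
  ev (elmor dm e) r n = if (0 < dm r n)%nat then e r n else 0.
Proof.
move=> hb; rewrite /ev /= /elfun.
case: (dim01 hb r n) => E; first by rewrite coord_dim0 ?E // scale0r.
by rewrite coord_gen // E scale1r.
Qed.

Lemma ev_lift d1 d2 (X : pcc) (h : pmor (mkpcc d2) X) (u : pmor (mkpcc d1) X) :
  bnd d1 -> bnd d2 ->
  (forall r n a, h r n (mkmor d1 d2 r n a) = u r n a) ->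
  forall r n, ev u r n = if (0 < d1 r n)%nat && (0 < d2 r n)%nat then ev h r n else 0.
Proof.
move=> b1 b2 H r n; rewrite {1}/ev -H /= ev_apply // coord_pid //.
case: (dim01 b1 r n) => E; first by rewrite coord_dim0 // E /= if_same scale0r.
rewrite coord_gen // E /=; by case: ifP => _; rewrite ?scale1r ?scale0r.
Qed.

Lemma comm_build d1 d2 (X Y : pcc) (p : pmor X Y) (u : pmor (mkpcc d1) X) (v : pmor (mkpcc d2) Y) :
  bnd d1 -> bnd d2 ->
  (forall r n, (0 < d1 r n)%nat -> p r n (ev u r n) = if (0 < d2 r n)%nat then ev v r n else 0) ->
  forall r n a, p r n (u r n a) = v r n (mkmor d1 d2 r n a).
Proof.
move=> b1 b2 H r n a; rewrite ev_apply // linearZ /= ev_apply // coord_pid //.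
case: (dim01 b1 r n) => E; first by rewrite coord_dim0 // if_same !scale0r.
rewrite H ?E //; by case: ifP => _; rewrite ?scaler0 ?scale0r.
Qed.

Lemma elmor_law dm (X : pcc) (e : forall r n, X r n) : bnd dm ->
  (forall r n, (0 < dm r n)%nat -> pd X r n (e r n) = if (0 < dm r n.+1)%nat then e r n.+1 else 0) ->
  (forall r r' n, nnle r r' -> (0 < dm r n)%nat ->
      ptr X r r' n (e r n) = if (0 < dm r' n)%nat then e r' n else 0) ->
  pmor_law (elmor dm e).
Proof.
move=> hb H1 H2; split.
  move=> r n x; rewrite /= /elfun linearZ /= coord_pid //.
  case: (dim01 hb r n) => E; first by rewrite coord_dim0 // if_same !scale0r.
  rewrite H1 ?E //; by case: ifP => _; rewrite ?scaler0 ?scale0r.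
move=> r r' n x le; rewrite /= /elfun linearZ /= coord_pid //.
case: (dim01 hb r n) => E; first by rewrite coord_dim0 // if_same !scale0r.
rewrite H2 ?E //; by case: ifP => _; rewrite ?scaler0 ?scale0r.
Qed.

Lemma comm_ev d1 d2 (X Y : pcc) (p : pmor X Y) (u : pmor (mkpcc d1) X) (v : pmor (mkpcc d2) Y) :
  bnd d1 -> bnd d2 ->
  (forall r n a, p r n (u r n a) = v r n (mkmor d1 d2 r n a)) ->
  forall r n, p r n (ev u r n) = if (0 < d1 r n)%nat && (0 < d2 r n)%nat then ev v r n else 0.
Proof.
move=> b1 b2 H r n; rewrite /ev H /= ev_apply // coord_pid //.
case: (dim01 b1 r n) => E; first by rewrite coord_dim0 // E /= if_same scale0r.
rewrite coord_gen // E /=; by case: ifP => _; rewrite ?scale1r ?scale0r.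
Qed.

Ltac dims := unfold nnle, Sph_dim, Dsk_dim, zero_dim, Sdim, Ddim in *;
  repeat match goal with
  | |- context [Rlt_dec ?a ?b] => destruct (Rlt_dec a b)
  | H : context [Rlt_dec ?a ?b] |- _ => destruct (Rlt_dec a b)
  end; cbn [is_left] in *; try (exfalso; lra); try lia.

Lemma bnd_Sph k s t : bnd (Sph_dim k s t).
Proof. move=> r n; case: t => [t|]; case: k => [|k]; dims. Qed.
Lemma bnd_Dsk k s : bnd (Dsk_dim k s).
Proof. move=> r n; case: k => [|k]; dims. Qed.
Lemma bnd_zero : bnd zero_dim.
Proof. by []. Qed.

Lemma lv1_law (Y : pcc) k s (v : pmor (mkpcc (Dsk_dim k.+1 s)) Y) :
  pmor_law v -> pmor_law (elmor (Dsk_dim k.+2 s) (ev v)).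
Proof.
move=> lv; have bDs := bnd_Dsk k.+1 s; apply: elmor_law; first exact: bnd_Dsk.
  move=> r n Hn; rewrite ev_pd //.
  case: (dim01 bDs r n.+1) => E; first by rewrite (ev_zero v bDs E) !if_same.
  congr (if _ then _ else _); dims.
move=> r r' n le Hn; rewrite ev_ptr //.
case: (dim01 bDs r' n) => E; first by rewrite (ev_zero v bDs E) !if_same.
congr (if _ then _ else _); dims.
Qed.

Lemma J_case (X Y : pcc) (p : pmor X Y) k s t : Rlt s t ->
  rlp (I_map k.+2 s (Some t)) p -> rlp (I_map k.+1 s (Some t)) p -> rlp (J_map k.+1 s t) p.
Proof.
move=> st HI1 HI2 u v lu lv cuv.
have bDt := bnd_Dsk k.+1 t; have bDs := bnd_Dsk k.+1 s; have bD1 := bnd_Dsk k.+2 s.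
have bS1 := bnd_Sph k.+2 s (Some t); have bS2 := bnd_Sph k.+1 s (Some t).
have puv := comm_ev bDt bDs cuv.
pose u1 := elmor (Sph_dim k.+2 s (Some t)) (ev u).
pose v1 := elmor (Dsk_dim k.+2 s) (ev v).
have lu1 : pmor_law u1.
  apply: elmor_law => //.
    move=> r n Hn; rewrite ev_pd //.
    case: (dim01 bDt r n.+1) => E; first by rewrite (ev_zero u bDt E) !if_same.
    congr (if _ then _ else _); dims.
  move=> r r' n le Hn; rewrite ev_ptr //.
  case: (dim01 bDt r' n) => E; first by rewrite (ev_zero u bDt E) !if_same.
  congr (if _ then _ else _); dims.
have lv1 : pmor_law v1 by exact: lv1_law.
have c1 : forall r n a, p r n (u1 r n a) = v1 r n (I_map k.+2 s (Some t) r n a).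
  apply: comm_build => // r n Hn.
  rewrite !ev_elmor // Hn puv.
  case: (dim01 bDs r n) => E; first by rewrite (ev_zero v bDs E) !if_same.
  have -> : (0 < Dsk_dim k.+1 t r n)%nat && (0 < Dsk_dim k.+1 s r n)%nat = true by dims.
  have -> : (0 < Dsk_dim k.+2 s r n)%nat = true by dims.
  done.
have [h1 [lh1 [hi1 hp1]]] := HI1 u1 v1 lu1 lv1 c1.
have F1 := ev_lift bS1 bD1 hi1.
pose e2 r n := if Rlt_dec (proj1_sig r) t then ev h1 r n else ev u r n.
pose u2 := elmor (Sph_dim k.+1 s (Some t)) e2.
have lu2 : pmor_law u2.
  apply: elmor_law => //.
    move=> r n Hn; rewrite /e2; destruct (Rlt_dec (proj1_sig r) t) as [rt|rt]; cbn [is_left].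
      rewrite ev_pd //.
      have Z := F1 r n.+1.
      rewrite ev_elmor // (ev_zero u bDt (_ : Dsk_dim k.+1 t r n.+1 = 0%nat)) ?if_same in Z; last by dims.
      have c : (0 < Sph_dim k.+2 s (Some t) r n.+1)%nat && (0 < Dsk_dim k.+2 s r n.+1)%nat = true by dims.
      by rewrite c in Z; rewrite -Z !if_same.
    rewrite ev_pd //.
    case: (dim01 bDt r n.+1) => E; first by rewrite (ev_zero u bDt E) !if_same.
    congr (if _ then _ else _); dims.
  move=> r r' n le Hn; rewrite /e2.
  destruct (Rlt_dec (proj1_sig r) t) as [rt|rt]; destruct (Rlt_dec (proj1_sig r') t) as [rt'|rt']; cbn [is_left].
  - rewrite ev_ptr //; congr (if _ then _ else _); dims.
  - rewrite ev_ptr //.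
    have Z := F1 r' n.
    rewrite ev_elmor // in Z.
    have c : (0 < Sph_dim k.+2 s (Some t) r' n)%nat && (0 < Dsk_dim k.+2 s r' n)%nat = true by dims.
    have c' : (0 < Sph_dim k.+2 s (Some t) r' n)%nat = true by dims.
    rewrite c c' in Z; rewrite -Z; congr (if _ then _ else _); dims.
  - exfalso; dims.
  - rewrite ev_ptr //; congr (if _ then _ else _); dims.
have c2 : forall r n a, p r n (u2 r n a) = v r n (I_map k.+1 s (Some t) r n a).
  apply: comm_build => // r n Hn.
  rewrite !ev_elmor // Hn /e2.
  destruct (Rlt_dec (proj1_sig r) t) as [rt|rt]; cbn [is_left].
    transitivity (ev v1 r n); first exact: hp1.
    rewrite ev_elmor //; congr (if _ then _ else _); dims.
  rewrite puv; congr (if _ then _ else _); dims.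
have [h [lh [hi2 hp2]]] := HI2 u2 v lu2 lv c2.
exists h; split => //; split => // r n a.
rewrite /= ev_apply // coord_pid // [in RHS]ev_apply //.
case: (dim01 bDt r n) => E; first by rewrite coord_dim0 // if_same !scale0r.
have -> : (0 < Dsk_dim k.+1 s r n)%nat = true by dims.
congr (_ *: _).
have Z := ev_lift bS2 bDs hi2 r n.
rewrite ev_elmor // /e2 in Z.
have c : (0 < Sph_dim k.+1 s (Some t) r n)%nat && (0 < Dsk_dim k.+1 s r n)%nat = true by dims.
have c' : (0 < Sph_dim k.+1 s (Some t) r n)%nat = true by dims.
rewrite c c' in Z; rewrite -Z.
destruct (Rlt_dec (proj1_sig r) t) as [rt|rt]; cbn [is_left] => //; exfalso; dims.
Qed.

Lemma J0_case (X Y : pcc) (p : pmor X Y) k s :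
  rlp (I_map k.+2 s None) p -> rlp (I_map k.+1 s None) p -> rlp (J0_map k.+1 s) p.
Proof.
move=> HI1 HI2 u v lu lv cuv.
have bDs := bnd_Dsk k.+1 s; have bD1 := bnd_Dsk k.+2 s.
have bS1 := bnd_Sph k.+2 s None; have bS2 := bnd_Sph k.+1 s None.
pose u1 := elmor (Sph_dim k.+2 s None) (fun r n => (0 : X r n)).
pose v1 := elmor (Dsk_dim k.+2 s) (ev v).
have lu1 : pmor_law u1.
  by apply: elmor_law => // *; rewrite linear0 if_same.
have lv1 : pmor_law v1 by exact: lv1_law.
have c1 : forall r n a, p r n (u1 r n a) = v1 r n (I_map k.+2 s None r n a).
  apply: comm_build => // r n Hn.
  rewrite !ev_elmor // if_same linear0.
  by rewrite (ev_zero v bDs (_ : Dsk_dim k.+1 s r n = 0%nat)) ?if_same //; dims.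
have [h1 [lh1 [hi1 hp1]]] := HI1 u1 v1 lu1 lv1 c1.
have F1 := ev_lift bS1 bD1 hi1.
pose u2 := elmor (Sph_dim k.+1 s None) (ev h1).
have lu2 : pmor_law u2.
  apply: elmor_law => //.
    move=> r n Hn; rewrite ev_pd //.
    have Z := F1 r n.+1.
    rewrite ev_elmor // if_same in Z.
    have c : (0 < Sph_dim k.+2 s None r n.+1)%nat && (0 < Dsk_dim k.+2 s r n.+1)%nat = true by dims.
    by rewrite c in Z; rewrite -Z !if_same.
  move=> r r' n le Hn; rewrite ev_ptr //; congr (if _ then _ else _); dims.
have c2 : forall r n a, p r n (u2 r n a) = v r n (I_map k.+1 s None r n a).
  apply: comm_build => // r n Hn.
  rewrite !ev_elmor // Hn.
  transitivity (ev v1 r n); first exact: hp1.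
  rewrite ev_elmor //; congr (if _ then _ else _); dims.
have [h [lh [hi2 hp2]]] := HI2 u2 v lu2 lv c2.
exists h; split => //; split => // r n a.
rewrite /= ev_apply // coord_pid // [in RHS]ev_apply ?coord_dim0 ?if_same ?scale0r //.
Qed.

Lemma triv_case (X Y : pcc) (p : pmor X Y) A s (i : pmor (mkpcc A) (Dsk 0 s)) :
  bnd A -> (forall r n, A r n = 0%nat) -> rlp i p.
Proof.
move=> bA A0 u v lu lv cuv.
have bD := bnd_Dsk 0 s.
have D0 : forall r n, Dsk_dim 0 s r n = 0%nat by move=> r n; dims.
exists (elmor (Dsk_dim 0 s) (fun r n => (0 : X r n))); split.
  by apply: elmor_law => // *; rewrite linear0 if_same.
split => r n a.
  by rewrite /= /elfun scaler0 ev_apply // coord_dim0 ?scale0r.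
by rewrite /= /elfun scaler0 linear0 ev_apply // coord_dim0 ?scale0r.
Qed.

Local Close Scope ring_scope.

Theorem mainTheorem9 (X Y : pcc) (p : pmor X Y) :
  pcc_law X -> pcc_law Y -> pmor_law p ->
  (* RLP against I: S^k_[s,t) -> D^k_s, 0 <= s < t <= oo *)
  (forall (k : nat) (s t : R), Rle 0 s -> Rlt s t ->
      rlp (I_map k s (Some t)) p) ->
  (forall (k : nat) (s : R), Rle 0 s -> rlp (I_map k s None) p) ->
  (* RLP against J *)
  (forall (k : nat) (s t : R), Rle 0 s -> Rlt s t -> rlp (J_map k s t) p) /\
  (forall (k : nat) (s : R), Rle 0 s -> rlp (J0_map k s) p).
Proof.
move=> _ _ _ HI HIn; split.
  move=> [|k] s t hs st.
    apply: triv_case; first exact: bnd_Dsk.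
    by move=> r n; rewrite /Dsk_dim; case: Rlt_dec.
  by apply: J_case => //; apply: HI.
move=> [|k] s hs.
  apply: triv_case => //; exact: bnd_zero.
by apply: J0_case; apply: HIn.
Qed.
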